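(* Let $J:\mathbb{R}^N\to\mathbb{R}$ be a finite-valued convex function, let $\Phi:\mathbb{R}^N\to\mathbb{R}^P$ be linear, let $x_0\in\mathbb{R}^N$, and write $T=T_{x_0}=\mathrm{Lin}(\partial J(x_0))^\perp$. Assume $\ker(\Phi)\cap T=\{0\}$. Define the linearized pre-certificate $$\eta_F=\Phi^*\,\operatorname*{argmin}\{\|p\| \;:\; p\in\mathbb{R}^P,\ \Phi^*p\in\mathrm{aff}(\partial J(x_0))\}.$$ Then $$\eta_F=\Phi^*\,(\Phi_T^{+})^{*}\, e_{x_0},\qquad\text{where } e_{x_0}=\mathrm{P}_T(\partial J(x_0))\in\mathbb{R}^N.$$
   Context: $\partial J(x)$ denotes the convex subdifferential of $J$ at $x$. For a convex set $E$, $\mathrm{aff}(E)$ is its affine hull and $\mathrm{Lin}(E)$ the linear subspace parallel to $\mathrm{aff}(E)$. For a subspace $T$, $\mathrm{P}_T$ is the orthogonal projection onto $T$ and $\Phi_T=\Phi\,\mathrm{P}_T$. For a matrix $A$, $A^*$ is its transpose and $A^+$ its Moore–Penrose pseudo-inverse. Since $\mathrm{aff}(\partial J(x_0))$ is parallel to $T^\perp$, the image $\mathrm{P}_T(\partial J(x_0))$ consists of a single vector, denoted $e_{x_0}$. Under the assumption $\ker(\Phi)\cap T=\{0\}$, the constraint set in the definition of $\eta_F$ is a non-empty affine space, so the minimal-norm $p$ is unique and $\eta_F$ is well defined. *)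

(* Defs.v *)
From Stdlib Require Import ClassicalEpsilon.
From mathcomp Require Import all_boot all_order all_algebra.
From mathcomp Require Import reals.
Set Implicit Arguments. Unset Strict Implicit. Unset Printing Implicit Defensive.
Import Order.TTheory GRing.Theory Num.Theory.
Local Open Scope ring_scope.

Section Defs.
Variable R : realType.

Definition dotv n (u v : 'cV[R]_n) : R := (u^T *m v) 0 0.
Definition enorm n (u : 'cV[R]_n) : R := Num.sqrt (dotv u u).

Definition convex_fun n (J : 'cV[R]_n -> R) : Prop :=
  forall (x y : 'cV[R]_n) (t : R), 0 <= t -> t <= 1 ->
    J (t *: x + (1 - t) *: y) <= t * J x + (1 - t) * J y.

Definition subdiff n (J : 'cV[R]_n -> R) (x : 'cV[R]_n) : 'cV[R]_n -> Prop :=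
  fun g => forall y, J x + dotv g (y - x) <= J y.

Definition aff n (E : 'cV[R]_n -> Prop) : 'cV[R]_n -> Prop :=
  fun v => exists (k : nat) (s : 'I_k -> 'cV[R]_n) (l : 'I_k -> R),
    (forall i, E (s i)) /\ \sum_(i < k) l i = 1 /\ v = \sum_(i < k) l i *: s i.

Definition Lin n (E : 'cV[R]_n -> Prop) : 'cV[R]_n -> Prop :=
  fun w => exists u v, aff E u /\ aff E v /\ w = u - v.

Definition orthc n (S : 'cV[R]_n -> Prop) : 'cV[R]_n -> Prop :=
  fun t => forall w, S w -> dotv w t = 0.

Definition is_orthoproj n (T : 'cV[R]_n -> Prop) (P : 'M[R]_n) : Prop :=
  forall x, T (P *m x) /\ forall t, T t -> dotv t (x - P *m x) = 0.
Definition orthoproj n (T : 'cV[R]_n -> Prop) : 'M[R]_n :=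
  epsilon (inhabits 0) (is_orthoproj T).

Definition penrose m n (A : 'M[R]_(m, n)) (X : 'M[R]_(n, m)) : Prop :=
  [/\ A *m X *m A = A, X *m A *m X = X, (A *m X)^T = A *m X & (X *m A)^T = X *m A].
Definition mp_pinv m n (A : 'M[R]_(m, n)) : 'M[R]_(n, m) :=
  epsilon (inhabits 0) (penrose A).

Definition argmin_norm n (S : 'cV[R]_n -> Prop) : 'cV[R]_n :=
  epsilon (inhabits 0) (fun p => S p /\ forall q, S q -> enorm p <= enorm q).

Definition Tspace n (J : 'cV[R]_n -> R) (x0 : 'cV[R]_n) := orthc (Lin (subdiff J x0)).

Definition etaF p n (J : 'cV[R]_n -> R) (Phi : 'M[R]_(p, n)) (x0 : 'cV[R]_n) : 'cV[R]_n :=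
  Phi^T *m argmin_norm (fun q : 'cV[R]_p => aff (subdiff J x0) (Phi^T *m q)).

End Defs.

(* Main.v *)
Require Import Defs.
From mathcomp Require Import all_boot all_order all_algebra.
From mathcomp Require Import reals.
From Stdlib Require Import Classical ClassicalEpsilon.
Import Order.TTheory GRing.Theory Num.Theory.
Local Open Scope ring_scope.

Lemma sqn_sum (R : realType) n (v : 'cV[R]_n) :
  (v^T *m v) 0 0 = \sum_i v i 0 ^+ 2.
Proof. rewrite !mxE; apply: eq_bigr => i _; rewrite !mxE expr2 //. Qed.

Lemma sqn_ge0 (R : realType) n (v : 'cV[R]_n) : 0 <= (v^T *m v) 0 0.
Proof. rewrite sqn_sum; apply: sumr_ge0 => i _; exact: sqr_ge0. Qed.

Lemma sqn_eq0 (R : realType) n (v : 'cV[R]_n) : (v^T *m v) 0 0 = 0 -> v = 0.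
Proof.
rewrite sqn_sum => /eqP; rewrite psumr_eq0; last by move=> i _; exact: sqr_ge0.
move=> /allP H; apply/matrixP => i j; rewrite ord1 mxE.
have := H i (mem_index_enum i); rewrite /= sqrf_eq0 => /eqP //.
Qed.

Lemma gram_unit (R : realType) m n (A : 'M[R]_(m, n)) :
  row_free A -> A *m A^T \in unitmx.
Proof.
move=> fA; rewrite -row_free_unit; apply: inj_row_free => x Hx.
have : x *m A = 0.
  apply: trmx_inj; rewrite trmx0; apply: sqn_eq0.
  rewrite trmxK trmx_mul mulmxA -(mulmxA x) Hx mul0mx mxE //.
by move/eqP; rewrite mulmx_free_eq0 // => /eqP.
Qed.


Lemma trsym_eq (R : realType) k (Y Z : 'M[R]_k) : Y = Z -> Z^T = Z -> Y^T = Y.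
Proof. by move=> ->. Qed.

Lemma penrose_fact (R : realType) m r n (F : 'M[R]_(m,r)) (G : 'M[R]_(r,n)) :
  F^T *m F \in unitmx -> G *m G^T \in unitmx ->
  penrose (F *m G) (G^T *m invmx (G *m G^T) *m invmx (F^T *m F) *m F^T).
Proof.
move=> UF UG.
have hF : invmx (F^T *m F) *m (F^T *m F) = 1%:M by exact: mulVmx.
have hG : G *m G^T *m invmx (G *m G^T) = 1%:M by exact: mulmxV.
have tF : (invmx (F^T *m F))^T = invmx (F^T *m F) by rewrite trmx_inv trmx_mul trmxK.
have tG : (invmx (G *m G^T))^T = invmx (G *m G^T) by rewrite trmx_inv trmx_mul trmxK.
have eMX : F *m G *m (G^T *m invmx (G *m G^T) *m invmx (F^T *m F) *m F^T)
   = F *m invmx (F^T *m F) *m F^T.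
  rewrite !mulmxA -(mulmxA F G) -(mulmxA F). rewrite mulmxV // mulmx1 //.
have eXM : (G^T *m invmx (G *m G^T) *m invmx (F^T *m F) *m F^T) *m (F *m G)
   = G^T *m invmx (G *m G^T) *m G.
  by rewrite !mulmxA -(mulmxA _ F^T) -(mulmxA _ (invmx _)) mulVmx // mulmx1.
split.
- by rewrite eMX !mulmxA -(mulmxA _ F^T) -(mulmxA F) mulVmx // mulmx1.
- by rewrite eXM !mulmxA -(mulmxA _ G) -(mulmxA G^T) mulVmx // mulmx1.
- apply: (trsym_eq _ _ _ _ eMX).
  by rewrite !trmx_mul trmxK tF mulmxA.
- apply: (trsym_eq _ _ _ _ eXM).
  by rewrite !trmx_mul trmxK tG mulmxA.
Qed.

Lemma mp_exists (R : realType) m n (M : 'M[R]_(m,n)) : exists X, penrose M X.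
Proof.
set F := col_base M; set G := row_base M.
have fF : row_free F^T by rewrite /row_free mxrank_tr; exact: col_base_full.
have UF : F^T *m F \in unitmx by have := gram_unit _ _ _ _ fF; rewrite trmxK.
have UG : G *m G^T \in unitmx by exact: (gram_unit _ _ _ _ (row_base_free _)).
have := penrose_fact _ _ _ _ _ _ UF UG; rewrite mulmx_base => H; eexists; exact: H.
Qed.


Definition Bm (R : realType) N k (s : 'I_k -> 'cV[R]_N) (g : 'cV[R]_N) : 'M[R]_(k, N) :=
  \matrix_(i < k) (s i - g)^T.
Arguments Bm {R N k}.

Lemma span_step (R : realType) N (E : 'cV[R]_N -> Prop) (g : 'cV[R]_N) n :
  (exists s : 'I_n -> 'cV[R]_N, (forall i, E (s i)) /\ \rank (Bm s g) = n) \/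
  (exists k (s : 'I_k -> 'cV[R]_N), (forall i, E (s i)) /\
      forall y, E y -> ((y - g)^T <= Bm s g)%MS).
Proof.
elim: n => [|n IH].
  left; exists (fun _ => 0); split; first by case.
  by apply/eqP; rewrite -leqn0 rank_leq_row.
case: IH => [[s [Es rs]]|]; last by right.
case: (classic (forall y, E y -> ((y - g)^T <= Bm s g)%MS)) => [H|].
  by right; exists n, s.
move=> HH; have [y] := not_all_ex_not _ _ HH; move=> H1; have [Ey Hy] := imply_to_and _ _ H1.
left; pose s' := fun i : 'I_n.+1 => if unlift ord_max i is Some j then s j else y.
exists s'; split.
  by move=> i; rewrite /s'; case: (unlift ord_max i).
have sub1 : (Bm s g <= Bm s' g)%MS.
  apply/row_subP => i; rewrite /Bm rowK.
  have -> : (s i - g)^T = row (lift ord_max i) (Bm s' g).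
    by rewrite /Bm rowK /s' liftK.
  exact: row_sub.
have sub2 : ~~ (Bm s' g <= Bm s g)%MS.
  apply/negP => H; apply: Hy; apply: submx_trans H.
  have -> : (y - g)^T = row ord_max (Bm s' g) by rewrite /Bm rowK /s' unlift_none.
  exact: row_sub.
have lt : (Bm s g < Bm s' g)%MS by rewrite ltmxE sub1.
have := rank_ltmx lt; rewrite rs => h.
by apply/eqP; rewrite eqn_leq h rank_leq_row.
Qed.

Lemma span_exists (R : realType) N (E : 'cV[R]_N -> Prop) (g : 'cV[R]_N) :
  exists k (s : 'I_k -> 'cV[R]_N), (forall i, E (s i)) /\
      forall y, E y -> ((y - g)^T <= Bm s g)%MS.
Proof.
case: (span_step _ _ E g N.+1) => [[s [_ rs]]|H]; last exact: H.
by have := rank_leq_col (Bm s g); rewrite rs ltnn.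
Qed.


Lemma aff1 (R : realType) N (E : 'cV[R]_N -> Prop) x : E x -> aff E x.
Proof.
move=> Ex; exists 1%N, (fun _ => x), (fun _ => 1); split => //.
by rewrite !big_ord1 scale1r.
Qed.

Lemma aff_to_sub (R : realType) N (E : 'cV[R]_N -> Prop) g k (s : 'I_k -> 'cV[R]_N) :
  (forall y, E y -> ((y - g)^T <= Bm s g)%MS) ->
  forall v, aff E v -> ((v - g)^T <= Bm s g)%MS.
Proof.
move=> Hsp v [m [s' [l [Es' [l1 ->]]]]].
have -> : \sum_(i < m) l i *: s' i - g = \sum_(i < m) l i *: (s' i - g).
  by under [RHS]eq_bigr do rewrite scalerBr; rewrite sumrB -scaler_suml l1 scale1r.
rewrite linear_sum; apply: summx_sub => i _; rewrite linearZ /=.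
by apply: scalemx_sub; apply: Hsp.
Qed.

Arguments aff_to_sub {R N E g k s}.

Lemma sub_to_aff (R : realType) N (E : 'cV[R]_N -> Prop) g k (s : 'I_k -> 'cV[R]_N) :
  E g -> (forall i, E (s i)) ->
  forall v, ((v - g)^T <= Bm s g)%MS -> aff E v.
Proof.
move=> Eg Es v /submxP [y Hy].
have Hv : v - g = \sum_(i < k) y 0 i *: (s i - g).
  apply: trmx_inj; rewrite Hy mulmx_sum_row linear_sum; apply: eq_bigr => i _.
  by rewrite linearZ /= /Bm rowK.
pose s2 := fun i : 'I_k.+1 => if unlift ord_max i is Some j then s j else g.
pose l2 := fun i : 'I_k.+1 => if unlift ord_max i is Some j then y 0 j
                              else 1 - \sum_(j < k) y 0 j.
have wK : forall i : 'I_k, unlift ord_max (widen_ord (leqnSn k) i) = Some i.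
  move=> i; have -> : widen_ord (leqnSn k) i = lift ord_max i.
    by apply: ord_inj; rewrite lift_max.
  by rewrite liftK.
exists k.+1, s2, l2; split; [|split].
- by move=> i; rewrite /s2; case: (unlift ord_max i).
- rewrite big_ord_recr /= /l2 unlift_none.
  under eq_bigr do rewrite wK.
  by rewrite addrC subrK.
- rewrite big_ord_recr /= /l2 /s2 unlift_none.
  under eq_bigr do rewrite wK.
  have -> : v = g + (v - g) by rewrite addrC subrK.
  rewrite Hv (eq_bigr (fun i => y 0 i *: s i - y 0 i *: g)); last by move=> i _; rewrite scalerBr.
  rewrite sumrB -scaler_suml scalerBl scale1r.
  by rewrite addrCA.
Qed.

Lemma T_ker (R : realType) N (E : 'cV[R]_N -> Prop) g k (s : 'I_k -> 'cV[R]_N) :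
  E g -> (forall i, E (s i)) -> (forall y, E y -> ((y - g)^T <= Bm s g)%MS) ->
  forall t, orthc (Lin E) t <-> Bm s g *m t = 0.
Proof.
move=> Eg Es Hsp t; split.
- move=> Ht; apply/row_matrixP => i; rewrite row_mul /Bm rowK row0.
  apply/matrixP => a b; rewrite !ord1 [RHS]mxE.
  apply: (Ht (s i - g)); exists (s i), g; split; [exact: aff1|split; [exact: aff1|by []]].
- move=> Ht w [u [v [au [av ->]]]].
  have hu := aff_to_sub Hsp _ au; have hv := aff_to_sub Hsp _ av.
  have : ((u - v)^T <= Bm s g)%MS.
    have -> : (u - v)^T = (u - g)^T + (-1) *: (v - g)^T.
      by rewrite scaleN1r !linearB /= opprK addrACA addNr addr0.
    by apply: addmx_sub => //; apply: scalemx_sub.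
  by case/submxP => z Hz; rewrite /dotv Hz -mulmxA Ht mulmx0 mxE.
Qed.


Definition PmC (R : realType) r N (C : 'M[R]_(r, N)) : 'M[R]_N :=
  1%:M - C^T *m invmx (C *m C^T) *m C.
Arguments PmC {R r N}.

Lemma PmC_props (R : realType) r N (C : 'M[R]_(r, N)) :
  C *m C^T \in unitmx ->
  [/\ C *m PmC C = 0, (PmC C)^T = PmC C, PmC C *m PmC C = PmC C &
      forall v : 'cV[R]_N, PmC C *m v = 0 -> (v^T <= C)%MS].
Proof.
move=> UC.
have CP : C *m PmC C = 0.
  by rewrite /PmC mulmxBr mulmx1 !mulmxA mulmxV // mul1mx subrr.
split => //.
- by rewrite /PmC linearB /= trmx1 !trmx_mul trmxK trmx_inv trmx_mul trmxK mulmxA.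
- by rewrite {1}/PmC mulmxBl mul1mx -!mulmxA CP !mulmx0 subr0.
- move=> v Hv.
  have -> : v = C^T *m (invmx (C *m C^T) *m (C *m v)).
    apply/eqP; rewrite !mulmxA -subr_eq0 -{1}(mul1mx v) -mulmxBl; exact/eqP.
  rewrite trmx_mul trmxK; exact: submxMl.
Qed.

Lemma PmC_fix (R : realType) r N (C : 'M[R]_(r, N)) (t : 'cV[R]_N) :
  C *m t = 0 -> PmC C *m t = t.
Proof. by move=> Ct; rewrite /PmC mulmxBl mul1mx -!mulmxA Ct !mulmx0 subr0. Qed.

Definition Pm (R : realType) k N (B : 'M[R]_(k, N)) : 'M[R]_N := PmC (row_base B).
Arguments Pm {R k N}.

Lemma Pm_props (R : realType) k N (B : 'M[R]_(k, N)) :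
  [/\ B *m Pm B = 0, (Pm B)^T = Pm B, Pm B *m Pm B = Pm B &
      forall v : 'cV[R]_N, Pm B *m v = 0 <-> (v^T <= B)%MS].
Proof.
have UC := gram_unit _ _ _ _ (row_base_free B).
have [CP tP PP HP] := PmC_props _ _ _ _ UC.
have BC : (B <= row_base B)%MS by rewrite eq_row_base.
have CB : (row_base B <= B)%MS by rewrite eq_row_base.
have BP : B *m Pm B = 0 by case/submxP: BC => Y HY; rewrite {1}HY -mulmxA /Pm CP mulmx0.
split => // v; split.
- by move/HP => H; exact: submx_trans H CB.
- case/submxP => y Hy; apply: trmx_inj.
  by rewrite trmx_mul /Pm tP Hy -mulmxA -/(Pm B) BP mulmx0 trmx0.
Qed.

Lemma orthoproj_eq (R : realType) k N (B : 'M[R]_(k, N)) (T : 'cV[R]_N -> Prop) :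
  (forall t, T t <-> B *m t = 0) -> orthoproj T = Pm B.
Proof.
move=> HT.
have [BP tP PP _] := Pm_props _ _ _ B.
have CB : (row_base B <= B)%MS by rewrite eq_row_base.
have Pt : forall t : 'cV[R]_N, B *m t = 0 -> Pm B *m t = t.
  move=> t Bt; case/submxP: CB => Z HZ.
  have Ct : row_base B *m t = 0 by rewrite HZ -mulmxA Bt mulmx0.
  exact: PmC_fix.
have HP : is_orthoproj T (Pm B).
  move=> x; split; first by apply/HT; rewrite mulmxA BP mul0mx.
  move=> t /HT Bt; have Ptt := Pt t Bt.
  by rewrite /dotv mulmxBr -{1}Ptt trmx_mul tP mulmxA subrr mxE.
have HP' : is_orthoproj T (orthoproj T).
  by rewrite /orthoproj; apply: epsilon_spec; exists (Pm B).
have pw : forall x : 'cV[R]_N, orthoproj T *m x = Pm B *m x.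
  move=> x; apply: subr0_eq.
  set d := orthoproj T *m x - Pm B *m x.
  have Td : T d.
    apply/HT; rewrite /d mulmxBr [B *m (Pm B *m x)]mulmxA BP mul0mx subr0.
    by apply/HT; case: (HP' x).
  apply: sqn_eq0.
  have e1 := (HP x).2 d Td; have e2 := (HP' x).2 d Td.
  move: e1 e2; rewrite /dotv => e1 e2.
  have Hd : d = (x - Pm B *m x) - (x - orthoproj T *m x).
    have L : forall a b c : 'cV[R]_N, a - b = (c - b) - (c - a).
      by move=> a b c; rewrite opprB [RHS]addrC addrA subrK.
    exact: L.
  by rewrite {2}Hd mulmxBr mxE e1 mxE e2 oppr0 addr0.
apply: trmx_inj; apply/row_matrixP => j.
by rewrite -!tr_col !colE pw.
Qed.


Lemma addE (R : realType) m n (A B : 'M[R]_(m, n)) i j : (A + B) i j = A i j + B i j.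
Proof. by rewrite mxE. Qed.

Lemma pyth (R : realType) n (a w : 'cV[R]_n) : (a^T *m w) 0 0 = 0 ->
  ((a + w)^T *m (a + w)) 0 0 = (a^T *m a) 0 0 + (w^T *m w) 0 0.
Proof.
move=> h.
have h' : (w^T *m a) 0 0 = 0 by rewrite -h -{1}(trmxK a) -trmx_mul mxE.
rewrite [(a + w)^T]linearD /= !mulmxDl !mulmxDr !addE h h' addr0 add0r //.
Qed.

Theorem proposition1 (R : realType) (N P : nat) (J : 'cV[R]_N -> R)
  (Phi : 'M[R]_(P, N)) (x0 : 'cV[R]_N) :
  convex_fun J ->
  (forall x : 'cV[R]_N, Tspace J x0 x -> Phi *m x = 0 -> x = 0) ->
  forall g : 'cV[R]_N, subdiff J x0 g ->
  etaF J Phi x0 =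
    Phi^T *m (mp_pinv (Phi *m orthoproj (Tspace J x0)))^T
      *m (orthoproj (Tspace J x0) *m g).
Proof.
move=> _ Hinj g Eg.
have [k [s [Es Hsp]]] := span_exists _ _ (subdiff J x0) g.
have HT : forall t, Tspace J x0 t <-> Bm s g *m t = 0.
  exact: (T_ker _ _ _ _ _ _ Eg Es Hsp).
have eP := orthoproj_eq _ _ _ _ _ HT.
rewrite /etaF eP.
have [BP tP PP HP] := Pm_props _ _ _ (Bm s g).
have Haff : forall q : 'cV[R]_P, aff (subdiff J x0) (Phi^T *m q) <->
    (Phi *m Pm (Bm s g))^T *m q = Pm (Bm s g) *m g.
  move=> q; split.
  - move/(aff_to_sub Hsp) => /HP; rewrite mulmxBr => /eqP; rewrite subr_eq0 => /eqP <-.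
    by rewrite trmx_mul tP mulmxA.
  - move=> H; apply: (sub_to_aff _ _ _ _ _ _ Eg Es); apply/HP.
    by rewrite mulmxBr -H trmx_mul tP mulmxA subrr.
move: (Pm (Bm s g)) BP tP PP HP eP Haff => Pr BP tP PP HP eP Haff.
have pX : penrose (Phi *m Pr) (mp_pinv (Phi *m Pr)).
  by rewrite /mp_pinv; apply: epsilon_spec; exact: mp_exists.
move: (mp_pinv (Phi *m Pr)) pX => X [h1 h2 h3 h4].
have XM : X *m (Phi *m Pr) = Pr *m (Phi^T *m X^T).
  by rewrite -h4 !trmx_mul tP -mulmxA.
have hX : X *m X^T *m (Phi *m Pr)^T = X by rewrite -mulmxA -trmx_mul h3 mulmxA h2.
have Pe : Pr *m (Pr *m g) = Pr *m g by rewrite mulmxA PP.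
have Xe : X *m (Phi *m Pr) *m (Pr *m g) = Pr *m g.
  symmetry; apply: subr0_eq.
  have Mz : Phi *m Pr *m (Pr *m g - X *m (Phi *m Pr) *m (Pr *m g)) = 0.
    by rewrite mulmxBr (mulmxA (Phi *m Pr) (X *m (Phi *m Pr))) (mulmxA (Phi *m Pr) X) h1 subrr.
  have Pz : Pr *m (Pr *m g - X *m (Phi *m Pr) *m (Pr *m g)) =
            Pr *m g - X *m (Phi *m Pr) *m (Pr *m g).
    by rewrite mulmxBr Pe XM !mulmxA PP.
  have zl : forall z : 'cV[R]_N, Pr *m z = z -> Phi *m Pr *m z = 0 -> z = 0.
    move=> z Pz' Mz'; apply: Hinj.
    - by apply/HT; rewrite -Pz' mulmxA BP mul0mx.
    - by rewrite -Pz' mulmxA.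
  exact: zl Pz Mz.
have qsC : (Phi *m Pr)^T *m (X^T *m (Pr *m g)) = Pr *m g.
  by rewrite mulmxA -trmx_mul h4 Xe.
have orth : forall q : 'cV[R]_P, (Phi *m Pr)^T *m q = Pr *m g ->
    ((X^T *m (Pr *m g))^T *m (q - X^T *m (Pr *m g))) 0 0 = 0.
  move=> q Hq.
  have : X *m (q - X^T *m (Pr *m g)) = 0.
    by rewrite -{1}hX -mulmxA mulmxBr Hq qsC subrr mulmx0.
  by rewrite trmx_mul trmxK -mulmxA => ->; rewrite mulmx0 mxE.
set qs := X^T *m (Pr *m g).
have Cqs : aff (subdiff J x0) (Phi^T *m qs) by apply/Haff.
have sq : forall q : 'cV[R]_P, aff (subdiff J x0) (Phi^T *m q) ->
    (q^T *m q) 0 0 = (qs^T *m qs) 0 0 + ((q - qs)^T *m (q - qs)) 0 0.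
  move=> q /Haff Hq; rewrite -pyth; last exact: orth.
  by rewrite addrC subrK.
have minE : forall q, aff (subdiff J x0) (Phi^T *m q) -> enorm qs <= enorm q.
  move=> q Hq; rewrite /enorm /dotv ler_psqrt ?nnegrE ?sqn_ge0 //.
  by rewrite (sq q Hq) lerDl sqn_ge0.
rewrite /argmin_norm.
have ex : exists p : 'cV[R]_P, aff (subdiff J x0) (Phi^T *m p) /\
    forall q : 'cV[R]_P, aff (subdiff J x0) (Phi^T *m q) -> enorm p <= enorm q.
  by exists qs; split.
have := epsilon_spec (inhabits 0) _ ex.
move: (epsilon _ _) => p [Cp mp].
have : enorm p <= enorm qs := mp _ Cqs.
rewrite /enorm /dotv ler_psqrt ?nnegrE ?sqn_ge0 // (sq p Cp) gerDl => h.
have w0 : p - qs = 0.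
  by apply: sqn_eq0; apply/eqP; rewrite eq_le h sqn_ge0.
by rewrite (subr0_eq w0) /qs mulmxA.
Qed.
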